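(* GREEDY and RANKING have online competitive ratio $0$ for IFM: for every $\varepsilon>0$ there exists an IFM instance on which $\min_{i\in I}\mathbb E[Z_i]\le\varepsilon\cdot\mathrm{OPT}$ under GREEDY, and likewise an instance on which this holds under RANKING. Since IFM is the special case of GFM in which every group is a singleton $\{i\}$, the same holds for GFM.
   Context: Model. An instance consists of a finite bipartite graph $(I,J,E)$, where $I$ is the set of offline agents and $J$ the set of online agent types, with $|J|=T$, together with problem-specific data described below. For $i\in I$ let $\mathcal N_i=\{j\in J:(i,j)\in E\}$ and for $j\in J$ let $\mathcal N_j=\{i\in I:(i,j)\in E\}$; write $i\sim j$ (equivalently $j\sim i$) when $(i,j)\in E$. There are $T$ rounds $t=1,\dots,T$; in each round exactly one online agent arrives, whose type is drawn uniformly at random from $J$ (each type with probability $1/T$), independently across rounds. Each offline agent can be matched at most once. When an online agent of type $j$ arrives, an online algorithm (which knows the instance but not future arrivals) must immediately and irrevocably either reject it or match it to a currently unmatched $i\in\mathcal N_j$. Let $Z_i$ be the indicator that offline agent $i$ is matched by the end. Objectives: IFM maximizes $\min_{i\in I}\mathbb E[Z_i]$; GFM, given a collection $\mathcal G$ of nonempty subsets of $I$ (groups, possibly overlapping), maximizes $\min_{G\in\mathcal G}\frac1{|G|}\sum_{i\in G}\mathbb E[Z_i]$. A clairvoyant policy observes the entire arrival sequence before choosing (possibly randomly) which arrivals to match to which compatible unmatched offline agents; the clairvoyant optimum $\mathrm{OPT}$ is the supremum of the objective over clairvoyant policies. GREEDY (for IFM): when an online agent of type $j$ arrives, if it has at least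 one currently unmatched neighbor, match it to one chosen uniformly at random among its currently unmatched neighbors; otherwise reject. RANKING: before the online phase draw a uniformly random permutation $\pi$ of $I$; when an online agent of type $j$ arrives, match it to the currently unmatched neighbor of $j$ that comes earliest in $\pi$, or reject if none exists. *)

(* Defs.v *)
From HB Require Import structures.
From mathcomp Require Import all_boot all_order all_algebra all_fingroup.
From mathcomp Require Import all_classical all_reals.
Set Implicit Arguments. Unset Strict Implicit. Unset Printing Implicit Defensive.
Import Order.TTheory GRing.Theory Num.Theory.
Local Open Scope ring_scope.
Local Open Scope classical_set_scope.

(* An instance: offline agents I, online types J, edge relation E i j.
   T = #|J| rounds; an arrival sequence is a #|J|-tuple of types, each
   sequence having probability (1/T)^T. *)
Definition arrivals (J : finType) := (#|J|).-tuple J.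

Definition nrounds_weight (R : realType) (J : finType) : R :=
  ((#|J|%:R : R) ^+ #|J|)^-1.

Definition unmatched_nbrs (I J : finType) (E : I -> J -> bool)
  (S : {set I}) (j : J) : {set I} := [set k | E k j & k \notin S].

(* GREEDY: probability that i is matched at the end, given the remaining
   arrivals s and current matched set S *)
Fixpoint greedy_prob (R : realType) (I J : finType) (E : I -> J -> bool)
  (s : seq J) (S : {set I}) (i : I) {struct s} : R :=
  match s with
  | [::] => if i \in S then 1 else 0
  | j :: s' =>
      let N := unmatched_nbrs E S j in
      if N == finset.set0 then greedy_prob R E s' S i
      else (#|N|%:R)^-1 * \sum_(k in N) greedy_prob R E s' (k |: S) i
  end.

Definition greedy_EZ (R : realType) (I J : finType) (E : I -> J -> bool)
  (i : I) : R :=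
  nrounds_weight R J * \sum_(s : arrivals J) greedy_prob R E s finset.set0 i.

(* RANKING: pi ranks agent k at position enum_rank (pi k); the earliest
   unmatched neighbour is the one of minimal position. *)
Definition earliest (I : finType) (pi : {perm I}) (N : {set I}) : option I :=
  [pick k in N | [forall k' in N, (enum_rank (pi k) <= enum_rank (pi k'))%N]].

Fixpoint ranking_final (I J : finType) (E : I -> J -> bool) (pi : {perm I})
  (s : seq J) (S : {set I}) {struct s} : {set I} :=
  match s with
  | [::] => S
  | j :: s' =>
      match earliest pi (unmatched_nbrs E S j) with
      | Some k => ranking_final E pi s' (k |: S)
      | None => ranking_final E pi s' S
      end
  end.

Definition ranking_EZ (R : realType) (I J : finType) (E : I -> J -> bool)
  (i : I) : R :=
  (#|{perm I}|%:R)^-1 * nrounds_weight R J *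
  \sum_(pi : {perm I}) \sum_(s : arrivals J)
      ((i \in ranking_final E pi s finset.set0) : nat)%:R.

(* Clairvoyant policies: for each arrival sequence, a probability
   distribution over matchings of that sequence (m t = Some k means the
   arrival in round t is matched to k). *)
Definition matching_of (I J : finType) (E : I -> J -> bool) (s : arrivals J)
  (m : {ffun 'I_#|J| -> option I}) : bool :=
  [forall t, match m t with Some k => E k (tnth s t) | None => true end] &&
  [forall t, forall t', ((m t != None) && (m t == m t')) ==> (t == t')].

Definition clairvoyant_policy (R : realType) (I J : finType)
  (E : I -> J -> bool)
  (p : arrivals J -> {ffun 'I_#|J| -> option I} -> R) : Prop :=
  [/\ forall s m, 0 <= p s m,
      forall s m, ~~ matching_of E s m -> p s m = 0
    & forall s, \sum_m p s m = 1].

Definition clair_EZ (R : realType) (I J : finType)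
  (p : arrivals J -> {ffun 'I_#|J| -> option I} -> R) (i : I) : R :=
  nrounds_weight R J *
  \sum_(s : arrivals J) \sum_m p s m * ([exists t, m t == Some i] : nat)%:R.

Definition ifm_obj (R : realType) (I : finType) (x : I -> R) : R :=
  inf (range x).

Definition gfm_obj (R : realType) (I : finType) (G : {set {set I}})
  (x : I -> R) : R :=
  inf ((fun g : {set I} => (#|g|%:R)^-1 * \sum_(i in g) x i)
         @` [set g | g \in G]).

Definition OPT_IFM (R : realType) (I J : finType) (E : I -> J -> bool) : R :=
  sup [set v | exists p, clairvoyant_policy E p /\ v = ifm_obj (clair_EZ p)].

Definition OPT_GFM (R : realType) (I J : finType) (E : I -> J -> bool)
  (G : {set {set I}}) : R :=
  sup [set v | exists p, clairvoyant_policy E p /\ v = gfm_obj G (clair_EZ p)].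

(* Main.v *)
Require Import Defs.
From HB Require Import structures.
From mathcomp Require Import all_boot all_order all_algebra all_fingroup.
From mathcomp Require Import all_classical all_reals.
From mathcomp Require Import zify ring lra.
Import Order.TTheory GRing.Theory Num.Theory.
Local Open Scope ring_scope.

Module MA.
Import Order.TTheory GRing.Theory Num.Theory.
Local Open Scope ring_scope.
Set Implicit Arguments. Unset Strict Implicit. Unset Printing Implicit Defensive.

Section Counting.
Variable R : realType.

Lemma sum_tuple_prod (J : finType) n (f : 'I_n -> J -> R) :
  \sum_(s : n.-tuple J) \prod_(t < n) f t (tnth s t) =
  \prod_(t < n) \sum_(j : J) f t j.
Proof.
rewrite bigA_distr_bigA /=.
rewrite (reindex (@finfun_of_tuple J n)) /=; last first.
  by exists (@tuple_of_finfun J n) => x _;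
     [apply: finfun_of_tupleK | apply: tuple_of_finfunK].
apply: eq_bigr => s _; apply: eq_bigr => t _.
by rewrite /finfun_of_tuple ffunE.
Qed.

Lemma prod_nat_bool n (b : 'I_n -> bool) :
  \prod_(t < n) ((b t)%:R : R) = ([forall t, b t])%:R.
Proof.
case: (boolP [forall t, b t]) => [/forallP H | /forallPn [t Ht]].
  by rewrite big1 // => t _; rewrite H.
by rewrite (bigD1 t) //= (negbTE Ht) mul0r.
Qed.

Lemma count1 (J : finType) n (t0 : 'I_n) (x : J) :
  \sum_(s : n.-tuple J) ((tnth s t0 == x) : nat)%:R = #|J|%:R ^+ n.-1 :> R.
Proof.
transitivity (\sum_(s : n.-tuple J) \prod_(t < n)
   (if t == t0 then ((tnth s t == x) : nat)%:R else 1 : R)).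
  apply: eq_bigr => s _; rewrite (bigD1 t0) //= eqxx big1 ?mulr1 //.
  by move=> t /negbTE ->.
rewrite (sum_tuple_prod (fun t j => if t == t0 then ((j == x) : nat)%:R else 1)).
have hx : \sum_(j : J) ((j == x) : nat)%:R = 1 :> R.
  by rewrite (bigD1 x) //= eqxx big1 ?addr0 //; move=> j /negbTE ->.
rewrite (bigD1 t0) //= eqxx hx mul1r.
rewrite (eq_bigr (fun _ => #|J|%:R)); last first.
  by move=> t /negbTE ->; rewrite sumr_const.
rewrite prodr_const.
by rewrite cardC1 card_ord.
Qed.

Lemma count2 (J : finType) n (t0 t1 : 'I_n) (x : J) : t0 != t1 ->
  \sum_(s : n.-tuple J) (((tnth s t0 == x) && (tnth s t1 == x)) : nat)%:R
    = #|J|%:R ^+ n.-2 :> R.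
Proof.
move=> ne.
transitivity (\sum_(s : n.-tuple J) \prod_(t < n)
   (if (t == t0) || (t == t1) then ((tnth s t == x) : nat)%:R else 1 : R)).
  apply: eq_bigr => s _; rewrite (bigD1 t0) //= eqxx (bigD1 t1) //= ?eqxx ?orbT;
    last by rewrite eq_sym.
  rewrite big1 ?mulr1 -?mulnb ?natrM //.
  by move=> t /andP [h1 h2]; rewrite (negbTE h1) (negbTE h2).
rewrite (sum_tuple_prod (fun t j => if (t == t0) || (t == t1) then ((j == x) : nat)%:R else 1)).
have hx : \sum_(j : J) ((j == x) : nat)%:R = 1 :> R.
  by rewrite (bigD1 x) //= eqxx big1 ?addr0 //; move=> j /negbTE ->.
rewrite (bigD1 t0) //= eqxx hx mul1r (bigD1 t1) //=; last by rewrite eq_sym.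
rewrite eqxx orbT hx mul1r.
rewrite (eq_bigr (fun _ => #|J|%:R)); last first.
  by move=> t /andP [h1 h2]; rewrite (negbTE h1) (negbTE h2) sumr_const.
rewrite prodr_const.
congr (_ ^+ _).
transitivity #|~: [set t0; t1]|; first by apply: eq_card => i; rewrite !inE negb_or.
have := cardsC [set t0; t1]; rewrite cards2 ne card_ord => h.
by rewrite -[X in X.-2]h add2n.
Qed.

Lemma sum_neq (J : finType) (i : J) :
  \sum_(j : J) ((j != i) : nat)%:R = (#|J|.-1)%:R :> R.
Proof.
rewrite -(cardC1 i) -sumr_const [RHS]big_mkcond /=.
by apply: eq_bigr => j _; rewrite !inE; case: (j != i).
Qed.

Lemma count3 (J : finType) n (i : J) :
  \sum_(s : n.-tuple J) ((i \notin s) : nat)%:R = (#|J|.-1)%:R ^+ n :> R.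
Proof.
transitivity (\sum_(s : n.-tuple J) \prod_(t < n) ((tnth s t != i) : nat)%:R : R).
  apply: eq_bigr => s _; rewrite prod_nat_bool; congr ((nat_of_bool _)%:R).
  apply/idP/idP.
    move=> h; apply/forallP => t; apply: contra h => /eqP <-; exact: mem_tnth.
  move=> /forallP h; apply/tnthP => -[t ht]; move: (h t); by rewrite ht eqxx.
rewrite (sum_tuple_prod (fun t j => ((j != i) : nat)%:R)).
by rewrite (eq_bigr _ (fun t _ => sum_neq i)) prodr_const card_ord.
Qed.

Lemma count_take (J : eqType) (x0 x : J) (s : seq J) t :
  (count_mem x (take t s))%:R =
  \sum_(t' < size s) (((t' < t)%N && (nth x0 s t' == x)) : nat)%:R :> R.
Proof.
elim: s t => [|y s IH] t /=; first by rewrite big_ord0.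
rewrite big_ord_recl /=.
case: t => [|t] /=.
  by rewrite big1 ?addr0.
by rewrite natrD IH.
Qed.

End Counting.

End MA.
Import MA.

Module MB.
Import Order.TTheory GRing.Theory Num.Theory.
Local Open Scope ring_scope.
Set Implicit Arguments. Unset Strict Implicit. Unset Printing Implicit Defensive.

Section Greedy.
Variables (R : realType) (I J : finType) (E : I -> J -> bool) (x : J) (a : I).
Hypothesis hx : forall k, E k x.
Hypothesis ha : forall j, j != x -> ~~ E a j.

Lemma gp_bounds s S i : 0 <= greedy_prob R E s S i <= 1.
Proof.
elim: s S => [|j s IH] S /=; first by case: (i \in S); rewrite ?ler01 ?lexx.
case: ifP => [_|hN]; first exact: IH.
have Npos : (0 < #|unmatched_nbrs E S j|)%N.
  by rewrite card_gt0 hN.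
apply/andP; split.
  by rewrite mulr_ge0 ?invr_ge0 ?ler0n // sumr_ge0 // => k _; case/andP: (IH (k |: S)).
rewrite -[leRHS](@mulVf _ (#|unmatched_nbrs E S j|%:R)); last by rewrite pnatr_eq0 -lt0n.
rewrite ler_wpM2l ?invr_ge0 ?ler0n //.
rewrite -sumr_const; apply: ler_sum => k _; by case/andP: (IH (k |: S)).
Qed.

Lemma greedy_ub s : forall (S : {set I}) c, a \notin S -> (#|S| <= c)%N ->
  (c + size s <= #|I|)%N ->
  greedy_prob R E s S a <=
  \sum_(t < size s) ((nth x s t == x) : nat)%:R / (#|I| - c - t)%:R.
Proof.
elim: s => [|j s IH] S c aS hS hc /=.
  by rewrite big_ord0 (negbTE aS).
rewrite big_ord_recl /=.
set B' := \sum_(i < size s) _.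
have eB : B' = \sum_(t < size s) ((nth x s t == x) : nat)%:R / (#|I| - c.+1 - t)%:R.
  apply: eq_bigr => i _; congr (_ / (_%:R)); rewrite /bump /=; lia.
have B'0 : 0 <= B'.
  by apply: sumr_ge0 => i _; rewrite divr_ge0 ?ler0n.
have hc' : (c.+1 + size s <= #|I|)%N by rewrite addSn -addnS.
have IH' : forall S' : {set I}, a \notin S' -> (#|S'| <= c.+1)%N -> greedy_prob R E s S' a <= B'.
  by move=> S' h1 h2; rewrite eB; apply: IH.
have t0 : 0 <= ((j == x) : nat)%:R / (#|I| - c - 0)%:R :> R by rewrite divr_ge0 ?ler0n.
case: ifP => [_|hN].
  apply: le_trans (IH' S aS _) _; [lia | by rewrite lerDr].
set N := unmatched_nbrs E S j.
have Npos : (0 < #|N|)%N by rewrite card_gt0 hN.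
have Nne : #|N|%:R != 0 :> R by rewrite pnatr_eq0 -lt0n.
have hcard : forall k, (#|k |: S| <= c.+1)%N.
  by move=> k; rewrite cardsU1; case: (k \in S) => /=; lia.
case: (eqVneq j x) => [ejx|njx].
- subst j.
  have cN : (#|I| - c <= #|N|)%N.
    have -> : #|N| = #|~: S|.
      by apply: eq_card => k; rewrite !inE hx.
    have := cardsC S; lia.
  have hsum : \sum_(k in N) greedy_prob R E s (k |: S) a <=
              \sum_(k in N) (((k == a) : nat)%:R + B').
    apply: ler_sum => k _; case: (eqVneq k a) => [->|nka] /=.
      case/andP: (gp_bounds s (a |: S) a) => _ h.
      by apply: (le_trans h); rewrite lerDl.
    rewrite add0r; apply: IH' => //.
    by rewrite in_setU1 negb_or aS andbT eq_sym.
  have hsum2 : \sum_(k in N) (((k == a) : nat)%:R + B') <= 1 + #|N|%:R * B'.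
    rewrite big_split /= sumr_const [in leRHS]mulr_natl lerD2r.
    apply: (le_trans (y := \sum_k ((k == a) : nat)%:R)).
      by rewrite [leRHS](bigID (fun k => k \in N)) /= lerDl; apply: sumr_ge0 => k _; rewrite ler0n.
    by rewrite (bigD1 a) //= eqxx big1 ?addr0 // => k /negbTE ->.
  apply: (le_trans (y := #|N|%:R^-1 * (1 + #|N|%:R * B'))).
    rewrite ler_wpM2l ?invr_ge0 ?ler0n //; exact: le_trans hsum hsum2.
  rewrite mulrDr mulr1 mulrA mulVf // mul1r lerD2r subn0 mul1r.
  rewrite lef_pV2 ?posrE ?ltr0n ?ler_nat //; last by rewrite /= in hc; lia.
- rewrite mul0r add0r.
  rewrite -[leRHS](mul1r) -[X in X * B'](@mulVf _ (#|N|%:R)) // -mulrA.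
  rewrite ler_wpM2l ?invr_ge0 ?ler0n // mulr_natl -sumr_const.
  apply: ler_sum => k kN; apply: IH' => //.
  rewrite in_setU1 negb_or aS andbT.
  apply/eqP => eka; move: kN; rewrite -eka inE => /andP [h _].
  by move: (ha njx); rewrite h.
Qed.
End Greedy.

Section GreedyEZ.
Variables (R : realType) (I J : finType) (E : I -> J -> bool) (x : J) (a : I).
Hypothesis hx : forall k, E k x.
Hypothesis ha : forall j, j != x -> ~~ E a j.
Hypothesis hJI : (#|J| <= #|I|)%N.
Hypothesis hJ0 : (0 < #|J|)%N.

Lemma weight_pow :
  nrounds_weight R J * #|J|%:R ^+ #|J|.-1 = #|J|%:R^-1.
Proof.
rewrite /nrounds_weight; case: #|J| hJ0 => // N _ /=.
rewrite exprS invfM -mulrA mulVf ?mulr1 //.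
by rewrite expf_neq0 // pnatr_eq0.
Qed.

Lemma greedy_EZ_ub :
  greedy_EZ R E a <= #|J|%:R^-1 * \sum_(t < #|J|) ((#|I| - t)%:R)^-1.
Proof.
rewrite /greedy_EZ.
apply: (le_trans (y := nrounds_weight R J * \sum_(s : arrivals J)
   \sum_(t < #|J|) ((tnth s t == x) : nat)%:R / (#|I| - t)%:R)).
  apply: ler_wpM2l; first by rewrite /nrounds_weight invr_ge0 exprn_ge0 ?ler0n.
  apply: ler_sum => s _.
  have := @greedy_ub R I J E x a hx ha s finset.set0 0.
  rewrite inE cards0 add0n size_tuple => /(_ isT isT hJI) h.
  apply: (le_trans h); rewrite le_eqVlt; apply/orP; left; apply/eqP.
  rewrite -(big_mkord xpredT (fun t => ((nth x s t == x) : nat)%:R / (#|I| - 0 - t)%:R)).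
  rewrite big_mkord; apply: eq_bigr => t _.
  by rewrite subn0 (tnth_nth x).
rewrite exchange_big /= mulr_sumr mulr_sumr; apply: ler_sum => t _.
rewrite -big_distrl /= count1 mulrA weight_pow.
done.
Qed.
End GreedyEZ.

End MB.
Import MB.

Module MC.
Import Order.TTheory GRing.Theory Num.Theory.
Local Open Scope ring_scope.
Set Implicit Arguments. Unset Strict Implicit. Unset Printing Implicit Defensive.

Lemma harmonic_ub (R : realType) (K T : nat) : (0 < K)%N ->
  \sum_(t < T) ((T - t)%:R)^-1 <= (minn T K)%:R + T%:R / K%:R :> R.
Proof.
move=> K0; elim: T => [|T IH]; first by rewrite big_ord0 min0n mul0r addr0.
rewrite big_ord_recl subn0.
rewrite (eq_bigr (fun t : 'I_T => ((T - t)%:R)^-1)); last first.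
  by move=> t _; rewrite /bump /=; congr ((_%:R)^-1); lia.
have hK : (0 : R) < K%:R by rewrite ltr0n.
have hdiv : T%:R / K%:R <= T.+1%:R / K%:R :> R.
  by rewrite ler_pM2r ?invr_gt0 // ler_nat.
case: (ltnP T K) => hTK.
  have -> : minn T.+1 K = (minn T K).+1 by lia.
  have h1 : (T.+1%:R)^-1 <= 1 :> R by rewrite invf_le1 ?ltr0n // ler1n.
  apply: le_trans (lerD h1 IH) _.
  rewrite -addn1 natrD; lra.
have -> : minn T.+1 K = minn T K by lia.
have h1 : (T.+1%:R)^-1 <= K%:R^-1 :> R.
  by rewrite lef_pV2 ?posrE ?ltr0n // ler_nat; lia.
apply: le_trans (lerD h1 IH) _.
rewrite -addn1 natrD mulrDl mul1r; lra.
Qed.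

End MC.
Import MC.

Module MD.
Import Order.TTheory GRing.Theory Num.Theory.
Local Open Scope ring_scope.
Set Implicit Arguments. Unset Strict Implicit. Unset Printing Implicit Defensive.

Section RankInv.
Variables (I : finType) (E : I -> I -> bool) (x : I).
Hypothesis hx : forall k, E k x.
Hypothesis hE : forall k j, j != x -> E k j -> k = j.

Definition rk (pi : {perm I}) (k : I) : nat := enum_rank (pi k).

Lemma rank_inv pi s : forall S : {set I}, x \notin S ->
  x \in ranking_final E pi s S ->
  exists t, [/\ (t < size s)%N, nth x s t == x &
   (#|[set k | [&& (rk pi k < rk pi x)%N, k \notin S & k \notin take t s]]|
      <= count_mem x (take t s))%N].
Proof.
elim: s => [|j s IH] S xS /=; first by rewrite (negbTE xS).
rewrite /earliest; case: pickP => [k /andP [kN /forallP hmin] | none].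
- case: (eqVneq k x) => [ekx | nkx].
  + subst k => _.
    have jx : j = x.
      move: kN; rewrite inE => /andP [h _]; apply/eqP; apply: contraT => njx.
      by have := hE njx h => ejx; rewrite -ejx eqxx in njx.
    subst j; exists 0%N; split => //=.
    rewrite leqn0 cards_eq0; apply/eqP/setP => k; rewrite !inE.
    apply/negbTE; apply/negP => /and3P [hlt kS _].
    have := hmin k; rewrite !inE hx kS /= => h; rewrite /rk in hlt.
    by move: h; rewrite leqNgt hlt.
  + move=> /IH [| t [ht1 ht2 ht3]].
      by rewrite in_setU1 negb_or xS andbT eq_sym.
    exists t.+1; split => //=.
    case: (eqVneq j x) => [ejx|njx].
      subst j.
      apply: leq_trans (_ : (#|k |: [set k0 | [&& (rk pi k0 < rk pi x)%N, k0 \notin k |: S & k0 \notin take t s]]| <= _)%N).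
        apply: subset_leq_card; apply/fintype.subsetP => k0; rewrite !inE.
        case: (eqVneq k0 k) => //= _ /and3P [h1 h2 h3].
        by move: h3; rewrite negb_or => /andP [_ ->]; rewrite h1 h2.
      by rewrite cardsU1; apply: leq_add; [case: (_ \notin _) | exact: ht3].
    have ekj : k = j by move: kN; rewrite inE => /andP [h _]; exact: (hE njx h).
    subst k.
    apply: leq_trans ht3; apply: subset_leq_card; apply/fintype.subsetP => k0; rewrite !inE.
    case/and3P => h1 h2; rewrite negb_or => /andP [h3 h4].
    by rewrite h1 negb_or h2 h3 h4.
- move=> /IH [// | t [ht1 ht2 ht3]].
  exists t.+1; split => //=.
  apply: leq_trans (leq_addl (j == x) _).
  apply: leq_trans ht3.
  apply: subset_leq_card; apply/fintype.subsetP => k0; rewrite !inE.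
  by case/and3P => h1 h2; rewrite negb_or => /andP [h3 h4]; rewrite h1 h2 h4.
Qed.
End RankInv.

End MD.
Import MD.

Module ME.
Import Order.TTheory GRing.Theory Num.Theory.
Local Close Scope ring_scope.
Set Implicit Arguments. Unset Strict Implicit. Unset Printing Implicit Defensive.

Section PermCount.
Variables (I : finType) (a : I) (W : {set I}).
Hypothesis aW : a \notin W.
Let U := a |: W.

Definition fW (p : {perm I}) := #|[set k in W | (rk p k < rk p a)%N]|.
Definition gU (p : {perm I}) v := #|[set k in U :\ v | (rk p k < rk p v)%N]|.

Lemma rk_inj (p : {perm I}) : injective (rk p).
Proof. by move=> k1 k2 /val_inj /enum_rank_inj /perm_inj. Qed.

Lemma fW_swap p v : v \in U -> fW (tperm a v * p)%g = gU p v.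
Proof.
move=> vU; rewrite /fW /gU.
have hrk : forall k, rk (tperm a v * p)%g k = rk p (tperm a v k).
  by move=> k; rewrite /rk permM.
rewrite -(card_preimset _ (@perm_inj _ (tperm a v))).
apply: eq_card => k; rewrite !inE hrk hrk tpermL.
congr (_ && _); last by rewrite tpermK.
move: vU; rewrite /U in_setU1.
case: tpermP => [-> | -> | h1 h2].
- case: (eqVneq v a) => [->|nva] /= h; first by rewrite (negbTE aW).
  by rewrite eqxx h.
- by rewrite eqxx (negbTE aW).
- by move=> _; move/eqP: h1 => /negbTE ->; move/eqP: h2 => ->.
Qed.

Lemma gU_few (p : {perm I}) m : (#|[set v in U | (gU p v <= m)%N]| <= m.+1)%N.
Proof.
set V := [set v in U | (gU p v <= m)%N].
case: (set_0Vmem V) => [-> | [v1 v1V]]; first by rewrite cards0.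
case: (@arg_maxnP _ v1 (mem V) (rk p) v1V) => v0 v0V hmax.
have v0V2 : v0 \in V := v0V.
rewrite (cardsD1 v0) v0V2 add1n ltnS.
have : (gU p v0 <= m)%N by move: v0V2; rewrite inE => /andP [].
apply: leq_trans; apply: subset_leq_card; apply/fintype.subsetP => v /setD1P [nvv0 vV].
have : (rk p v <= rk p v0)%N := hmax v vV.
rewrite leq_eqVlt => /orP [/eqP e|hlt].
  by move: nvv0; rewrite (rk_inj e) eqxx.
move: vV; rewrite !inE nvv0 => /andP [vU _]; by rewrite vU hlt.
Qed.

Lemma perm_count m :
  (#|W|.+1 * \sum_(p : {perm I}) (fW p <= m)%N <= m.+1 * #|{perm I}|)%N.
Proof.
have cU : #|U| = #|W|.+1 by rewrite /U cardsU1 aW.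
rewrite -cU -sum_nat_const.
rewrite (eq_bigr (fun v => \sum_(p : {perm I}) (fW (tperm a v * p)%g <= m)%N)); last first.
  move=> v _; exact: (reindex_inj (mulgI (tperm a v))).
rewrite exchange_big /=.
apply: (@leq_trans (\sum_(p : {perm I}) m.+1)); last by rewrite sum_nat_const mulnC.
apply: leq_sum => p _.
rewrite (eq_bigr (fun v => (gU p v <= m : nat))); last by move=> v vU; rewrite fW_swap.
apply: leq_trans (gU_few p m).
rewrite -sum1_card [leqRHS](eq_bigl (fun v => (v \in U) && (gU p v <= m)%N)); last by move=> v; rewrite !inE.
by rewrite big_mkcondr /=; apply: leq_sum => v _; case: (_ <= m)%N.
Qed.
End PermCount.

End ME.
Import ME.

Module MF.
Import Order.TTheory GRing.Theory Num.Theory.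
Local Open Scope ring_scope.
Set Implicit Arguments. Unset Strict Implicit. Unset Printing Implicit Defensive.

Section Pair.
Variables (R : realType) (J : finType) (x : J).

Lemma count_tnth (s : arrivals J) (t : nat) :
  (count_mem x (take t s))%:R =
  \sum_(t' < #|J|) (((t' < t)%N && (tnth s t' == x)) : nat)%:R :> R.
Proof.
rewrite (count_take R x x).
rewrite -(big_mkord xpredT (fun t' => (((t' < t)%N && (nth x s t' == x)) : nat)%:R)).
rewrite size_tuple big_mkord; apply: eq_bigr => t' _.
by rewrite (tnth_nth x).
Qed.

Lemma pair_bound (t : 'I_#|J|) :
  \sum_(s : arrivals J) ((tnth s t == x) : nat)%:R * (count_mem x (take t s)).+1%:R
   <= #|J|%:R ^+ #|J|.-1 + (#|J|.-1)%:R * #|J|%:R ^+ #|J|.-2 :> R.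
Proof.
under eq_bigr do rewrite -addn1 natrD mulrDr mulr1 count_tnth mulr_sumr.
rewrite big_split /= addrC count1 lerD2l exchange_big /=.
apply: (le_trans (y := \sum_(t' < #|J| | t' != t)
   \sum_(s : arrivals J) (((tnth s t == x) && (tnth s t' == x)) : nat)%:R)).
  rewrite [leLHS](bigD1 t) //= [X in X + _]big1 ?add0r; last first.
    by move=> s _; rewrite ltnn /= mulr0.
  apply: ler_sum => t' _; apply: ler_sum => s _.
  by case: (tnth s t == x); case: (tnth s t' == x); rewrite ?andbF /= ?mulr0 ?mul0r ?mul1r ?ler0n ?lexx //; case: (t' < t)%N.
rewrite (eq_bigr (fun _ => #|J|%:R ^+ #|J|.-2)); last first.
  by move=> t' h; rewrite count2 // eq_sym.
by rewrite sumr_const cardC1 card_ord mulr_natl.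
Qed.
End Pair.

Section RankEZ.
Variables (R : realType) (I : finType) (E : I -> I -> bool) (x : I).
Hypothesis hx : forall k, E k x.
Hypothesis hE : forall k j, j != x -> E k j -> k = j.

Definition Wst (s : seq I) (t : nat) := [set k | (k \notin take t s) && (k != x)].

Lemma ind_bound pi (s : arrivals I) :
  ((x \in ranking_final E pi s finset.set0) : nat)%:R <=
  \sum_(t < #|I|) ((tnth s t == x) : nat)%:R *
     ((fW x (Wst s t) pi <= count_mem x (take t s))%N : nat)%:R :> R.
Proof.
have h0 : 0 <= \sum_(t < #|I|) ((tnth s t == x) : nat)%:R *
     ((fW x (Wst s t) pi <= count_mem x (take t s))%N : nat)%:R :> R.
  by apply: sumr_ge0 => t _; rewrite mulr_ge0 ?ler0n.
case h: (x \in _); last by [].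
have [t [ht hnth hcard]] := rank_inv hx hE (negbT (finset.in_set0 x)) h.
move: ht; rewrite size_tuple => ht.
have hnth2 : tnth s (Ordinal ht) == x by rewrite (tnth_nth x).
rewrite (bigD1 (Ordinal ht)) //= hnth2.
rewrite (_ : (fW x (Wst s t) pi <= count_mem x (take t s))%N = true); last first.
  apply: leq_trans hcard; apply: subset_leq_card; apply/fintype.subsetP => k.
  by rewrite !inE => /andP [/andP [-> _] ->].
rewrite mul1r lerDl; apply: sumr_ge0 => t' _; rewrite mulr_ge0 ?ler0n //.
Qed.

Lemma card_Wst (s : arrivals I) (t : nat) : (#|I| - t <= #|Wst s t|.+1)%N.
Proof.
have h1 : (#|[set k | k \in take t s]| <= t)%N.
  apply: leq_trans (_ : size (take t s) <= t)%N.
    have -> : #|[set k | k \in take t s]| = #|take t s| by apply: eq_card => k; rewrite inE.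
    exact: fintype.card_size.
  by rewrite size_take; case: ifP => //; lia.
have h2 : (#|~: [set k | k \in take t s]| <= #|Wst s t|.+1)%N.
  apply: leq_trans (_ : #|x |: Wst s t| <= _)%N; last first.
    by rewrite cardsU1; case: (x \in _).
  apply: subset_leq_card; apply/fintype.subsetP => k; rewrite !inE.
  by case: (eqVneq k x) => //= _ ->.
have := cardsC [set k | k \in take t s]; lia.
Qed.

Lemma perm_avg (s : arrivals I) (t : 'I_#|I|) m :
  (#|{perm I}|%:R)^-1 * \sum_pi ((fW x (Wst s t) pi <= m)%N : nat)%:R
    <= m.+1%:R / (#|I| - t)%:R :> R.
Proof.
have hW : x \notin Wst s t by rewrite inE eqxx andbF.
have hc := perm_count hW m.
have cW := card_Wst s t.
have Pp : (0 : R) < #|{perm I}|%:R by rewrite ltr0n; apply/card_gt0P; exists 1%g.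
have Np : (0 : R) < (#|I| - t)%:R by rewrite ltr0n; have := ltn_ord t; lia.
rewrite -natr_sum.
set S := (\sum_pi _)%N in hc *.
rewrite mulrC ler_pdivrMr // mulrAC ler_pdivlMr //.
apply: (le_trans (y := (S * #|Wst s t|.+1)%:R)).
  by rewrite -natrM ler_nat leq_mul2l cW orbT.
by rewrite -natrM ler_nat mulnC.
Qed.

Lemma weight_bound2 (n : nat) : (0 < n)%N ->
  ((n%:R : R) ^+ n)^-1 * ((n.-1)%:R * n%:R ^+ n.-2) <= n%:R^-1.
Proof.
case: n => [//|[|M]] _ /=; first by rewrite mul0r mulr0 invr_ge0 ler0n.
have hp : (0 : R) < M.+2%:R by rewrite ltr0n.
have q0 : (M.+2%:R : R) ^+ M != 0 by rewrite expf_neq0 // gt_eqF.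
have c0 : (M.+2%:R : R) != 0 by rewrite gt_eqF.
have -> : (M.+2%:R ^+ M.+2)^-1 * (M.+1%:R * M.+2%:R ^+ M) =
          M.+1%:R / (M.+2%:R * M.+2%:R) :> R.
  rewrite !exprS; field; rewrite q0 andbT; apply/negP => /eqP h; have : (0:R) <= M%:R := ler0n _ _; lra.
rewrite ler_pdivrMr ?mulr_gt0 // mulrA mulVf // mul1r ler_nat //.
Qed.

Lemma ranking_EZ_ub :
  ranking_EZ R E x <= 2%:R * #|I|%:R^-1 * \sum_(t < #|I|) ((#|I| - t)%:R)^-1.
Proof.
have hI0 : (0 < #|I|)%N by apply/card_gt0P; exists x.
set P := (#|{perm I}|%:R : R).
set w := nrounds_weight R I.
have w0 : 0 <= w by rewrite /w /nrounds_weight invr_ge0 exprn_ge0 ?ler0n.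
have P0 : 0 <= P^-1 by rewrite invr_ge0 ler0n.
set a := fun (s : arrivals I) (t : 'I_#|I|) => ((tnth s t == x) : nat)%:R : R.
set b := fun (pi : {perm I}) (s : arrivals I) (t : 'I_#|I|) =>
   ((fW x (Wst s t) pi <= count_mem x (take t s))%N : nat)%:R : R.
apply: (le_trans (y := P^-1 * w * \sum_(pi : {perm I}) \sum_(s : arrivals I)
    \sum_(t < #|I|) a s t * b pi s t)).
  rewrite /ranking_EZ -/P -/w; apply: ler_wpM2l; first by rewrite mulr_ge0.
  apply: ler_sum => pi _; apply: ler_sum => s _; exact: ind_bound.
have -> : P^-1 * w * \sum_(pi : {perm I}) \sum_(s : arrivals I)
    \sum_(t < #|I|) a s t * b pi s t =
    w * \sum_(s : arrivals I) \sum_(t < #|I|) a s t * (P^-1 * \sum_pi b pi s t).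
  rewrite exchange_big /= [P^-1 * w]mulrC -mulrA; congr (w * _).
  rewrite mulr_sumr; apply: eq_bigr => s _.
  rewrite exchange_big /= mulr_sumr; apply: eq_bigr => t _.
  rewrite !mulr_sumr; apply: eq_bigr => pi _; ring.
apply: (le_trans (y := w * \sum_(s : arrivals I) \sum_(t < #|I|)
    a s t * ((count_mem x (take t s)).+1%:R / (#|I| - t)%:R))).
  apply: ler_wpM2l => //; apply: ler_sum => s _; apply: ler_sum => t _.
  by apply: ler_wpM2l; [rewrite ler0n | apply: perm_avg].
rewrite exchange_big /= mulr_sumr mulrC mulr_suml.
apply: ler_sum => t _.
have d0 : 0 <= ((#|I| - t)%:R : R)^-1 by rewrite invr_ge0 ler0n.
have -> : w * \sum_s a s t * ((count_mem x (take t s)).+1%:R / (#|I| - t)%:R) =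
   (#|I| - t)%:R^-1 * (w * \sum_s a s t * (count_mem x (take t s)).+1%:R).
  rewrite !mulr_sumr; apply: eq_bigr => s _; ring.
apply: ler_wpM2l => //.
apply: (le_trans (ler_wpM2l w0 (pair_bound R x t))).
rewrite mulrDr weight_pow // mulrC.
have := weight_bound2 hI0; rewrite -/(nrounds_weight R I) -/w => h.
have h2 : w * ((#|I|.-1)%:R * #|I|%:R ^+ #|I|.-2) <= #|I|%:R^-1 by [].
rewrite [_ * w]mulrC; apply: le_trans (lerD (lexx _) h2) _.
by rewrite mulr2n mulrDl mul1r.
Qed.
End RankEZ.
End MF.
Import MF.

Module MG.
Import Order.TTheory GRing.Theory Num.Theory.
Local Open Scope ring_scope.
Set Implicit Arguments. Unset Strict Implicit. Unset Printing Implicit Defensive.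

Section Opt.
Variables (R : realType) (I J : finType) (E : I -> J -> bool).
Hypothesis hJ0 : (0 < #|J|)%N.

Lemma weight_card : nrounds_weight R J * #|{: arrivals J}|%:R = 1.
Proof.
rewrite card_tuple natrX /nrounds_weight mulVf //.
by rewrite expf_neq0 // pnatr_eq0 -lt0n.
Qed.

Lemma w_ge0 : 0 <= nrounds_weight R J.
Proof. by rewrite /nrounds_weight invr_ge0 exprn_ge0 ?ler0n. Qed.

Lemma clair_bounds (p : arrivals J -> {ffun 'I_#|J| -> option I} -> R) i : clairvoyant_policy E p -> 0 <= clair_EZ p i <= 1.
Proof.
case=> p0 _ p1; apply/andP; split.
  rewrite mulr_ge0 ?w_ge0 //; apply: sumr_ge0 => s _; apply: sumr_ge0 => m _.
  by rewrite mulr_ge0 ?ler0n.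
rewrite /clair_EZ -[leRHS]weight_card; apply: ler_wpM2l; first exact: w_ge0.
rewrite -[leRHS]sumr_const; apply: ler_sum => s _; rewrite -[leRHS](p1 s); apply: ler_sum => m _.
rewrite -[leRHS]mulr1; apply: ler_wpM2l => //.
by case: [exists _, _]; rewrite ?ler01 ?lexx.
Qed.

Lemma final_ifm (F : I -> R) (i0 : I) (eps : R) :
  (forall i, 0 <= F i) ->
  (exists p : arrivals J -> {ffun 'I_#|J| -> option I} -> R,
     clairvoyant_policy E p /\ forall i, 2^-1 <= clair_EZ p i) ->
  F i0 <= eps / 2 -> 0 < eps ->
  0 < OPT_IFM R E /\ ifm_obj F <= eps * OPT_IFM R E.
Proof.
move=> F0 [p [hp hp2]] hF heps.
rewrite /OPT_IFM; set S := (X in sup X).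
have ubS : has_ubound S.
  exists 1 => v [q [hq ->]].
  apply: le_trans (ge_inf _ (_ : range (clair_EZ q) (clair_EZ q i0))) _.
  - by exists 0 => u [i _ <-]; case/andP: (clair_bounds i hq).
  - by exists i0.
  - by case/andP: (clair_bounds i0 hq).
have hopt : 2^-1 <= sup S.
  apply: le_trans (ub_le_sup ubS (_ : _ (ifm_obj (clair_EZ p)))).
    apply: lb_le_inf; first by exists (clair_EZ p i0), i0.
    by move=> v [i _ <-].
  by exists p.
have h2 : (0:R) < 2^-1 by rewrite invr_gt0.
split; first exact: lt_le_trans h2 hopt.
apply: le_trans (ge_inf _ (_ : range F (F i0))) _.
- by exists 0 => v [i _ <-].
- by exists i0.
- by apply: (le_trans hF); apply: ler_wpM2l => //; apply: ltW.
Qed.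
End Opt.

Lemma bern_aux (m k : nat) : (m ^ k.+1 + k.+1 * m ^ k <= m.+1 ^ k.+1)%N.
Proof.
elim: k => [|k IH]; first by rewrite !expn1 expn0 muln1 addn1.
rewrite [(m.+1 ^ k.+2)%N]expnS.
apply: leq_trans (leq_mul (leqnn m.+1) IH).
rewrite !expnS; nia.
Qed.

Lemma bern2 (m : nat) : (2 * m ^ m.+1 <= m.+1 ^ m.+1)%N.
Proof.
apply: leq_trans (bern_aux m m); rewrite expnS; nia.
Qed.

Section Policy.
Variables (R : realType) (I : finType) (E : I -> I -> bool).
Hypothesis hEkk : forall k, E k k.
Hypothesis hI0 : (0 < #|I|)%N.

Definition mstar (s : arrivals I) : {ffun 'I_#|I| -> option I} :=
  [ffun t => if index (tnth s t) s == t then Some (tnth s t) else None].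

Definition pstar (s : arrivals I) (m : {ffun 'I_#|I| -> option I}) : R :=
  ((m == mstar s) : nat)%:R.

Lemma mstar_matching s : matching_of E s (mstar s).
Proof.
apply/andP; split; apply/forallP => t; rewrite ffunE.
  by case: ifP.
apply/forallP => t'; apply/implyP; rewrite ffunE.
case: ifP => // /eqP h1 /andP [_ /eqP].
case: ifP => // /eqP h2 [e]; apply/eqP/val_inj => /=.
by rewrite -h1 -h2 e.
Qed.

Lemma pstar_policy : clairvoyant_policy E pstar.
Proof.
split.
- by move=> s m; rewrite ler0n.
- move=> s m hm; rewrite /pstar; case: eqP => // em.
  by move: hm; rewrite em mstar_matching.
- move=> s; rewrite (bigD1 (mstar s)) //= /pstar eqxx big1 ?addr0 //.
  by move=> m /negbTE ->.
Qed.

Lemma mstar_exists s i : [exists t, mstar s t == Some i] = (i \in s).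
Proof.
apply/existsP/idP => [[t]|].
  rewrite ffunE; case: ifP => // _ /eqP [<-]; exact: mem_tnth.
move=> hi.
have ht : (index i s < #|I|)%N by rewrite -{2}(size_tuple s) index_mem.
exists (Ordinal ht); rewrite ffunE.
have -> : tnth s (Ordinal ht) = i by rewrite (tnth_nth i) /= nth_index.
by rewrite eqxx.
Qed.

Lemma clair_half i : 2^-1 <= clair_EZ pstar i.
Proof.
have e1 : clair_EZ pstar i = nrounds_weight R I * \sum_(s : arrivals I) ((i \in s) : nat)%:R.
  congr (_ * _); apply: eq_bigr => s _.
  rewrite (bigD1 (mstar s)) //= /pstar eqxx mul1r big1 ?addr0 ?mstar_exists //.
  by move=> m /negbTE ->; rewrite mul0r.
have e2 : \sum_(s : arrivals I) ((i \in s) : nat)%:R =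
          #|{: arrivals I}|%:R - \sum_(s : arrivals I) ((i \notin s) : nat)%:R :> R.
  rewrite -sumr_const -sumrB; apply: eq_bigr => s _; case: (i \in s) => /=; lra.
rewrite e1 e2 count3 mulrBr weight_card //.
have hb := bern2 (#|I|.-1).
rewrite prednK // in hb.
have : (2 * (#|I|.-1) ^ #|I| <= #|I| ^ #|I|)%N by [].
rewrite -(ler_nat R) natrM natrX natrX => h.
have wp : 0 < nrounds_weight R I.
  by rewrite /nrounds_weight invr_gt0 exprn_gt0 // ltr0n.
have : nrounds_weight R I * (#|I|.-1%:R ^+ #|I|) <= 2^-1.
  rewrite -(ler_pM2l (_ : (0:R) < 2)) // mulrA mulfV ?pnatr_eq0 //.
  rewrite mulrAC mulrC -[leRHS](@mulVf _ (#|I|%:R ^+ #|I|)); last first.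
    by rewrite expf_neq0 // pnatr_eq0 -lt0n.
  by rewrite /nrounds_weight; apply: ler_wpM2l; rewrite ?invr_ge0 ?exprn_ge0 ?ler0n.
lra.
Qed.
End Policy.

End MG.
Import MG.

Module MH.
Import Order.TTheory GRing.Theory Num.Theory.
Local Open Scope ring_scope.
Set Implicit Arguments. Unset Strict Implicit. Unset Printing Implicit Defensive.

Definition Inst (K : nat) : finType := 'I_(K * K).-1.+1.
Definition Ek (K : nat) (k j : Inst K) : bool := (j == ord0) || (k == j).
Arguments Ek : clear implicits.

Section Inst.
Variables (R : realType) (K : nat).
Hypothesis K0 : (0 < K)%N.

Lemma card_Inst : #|Inst K| = (K * K)%N.
Proof. by rewrite card_ord prednK // muln_gt0 K0. Qed.

Lemma Ek_x (k : Inst K) : Ek K k ord0.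
Proof. by rewrite /Ek eqxx. Qed.

Lemma Ek_E (k j : Inst K) : j != ord0 -> Ek K k j -> k = j.
Proof. by rewrite /Ek => /negbTE -> /eqP. Qed.

Lemma Ek_a (j : Inst K) : j != ord0 -> ~~ Ek K ord0 j.
Proof.
move=> h; apply/negP; rewrite /Ek => /orP [] /eqP e; first by rewrite e eqxx in h.
by rewrite -e eqxx in h.
Qed.

Lemma Ek_kk (k : Inst K) : Ek K k k.
Proof. by rewrite /Ek eqxx orbT. Qed.

Lemma harm_K : #|Inst K|%:R^-1 * \sum_(t < #|Inst K|) ((#|Inst K| - t)%:R)^-1
   <= 2 / K%:R :> R.
Proof.
have hK : (0 : R) < K%:R by rewrite ltr0n.
have h := harmonic_ub R #|Inst K| K0.
have hT : (0 : R) < #|Inst K|%:R by rewrite card_Inst ltr0n muln_gt0 K0.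
have hTi : (0:R) <= #|Inst K|%:R^-1 by rewrite invr_ge0 ltW.
apply: le_trans (ler_wpM2l hTi h) _.
have hm : ((minn #|Inst K| K)%:R : R) <= K%:R by rewrite ler_nat geq_minr.
apply: le_trans (ler_wpM2l hTi (lerD hm (lexx _))) _.
rewrite card_Inst natrM le_eqVlt; apply/orP; left; apply/eqP.
by field; rewrite gt_eqF.
Qed.
End Inst.

Section Final.
Variable R : realType.

Lemma greedy_ge0 (I J : finType) (E : I -> J -> bool) i : 0 <= greedy_EZ R E i.
Proof.
rewrite /greedy_EZ mulr_ge0 ?w_ge0 //; apply: sumr_ge0 => s _.
by case/andP: (gp_bounds R E s finset.set0 i).
Qed.

Lemma ranking_ge0 (I J : finType) (E : I -> J -> bool) i : 0 <= ranking_EZ R E i.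
Proof.
rewrite /ranking_EZ mulr_ge0 ?mulr_ge0 ?invr_ge0 ?ler0n ?w_ge0 ?exprn_ge0 //.
by apply: sumr_ge0 => pi _; apply: sumr_ge0 => s _; rewrite ler0n.
Qed.

Lemma greedy_small K : (0 < K)%N -> greedy_EZ R (Ek K) ord0 <= 2 / K%:R.
Proof.
move=> K0.
have hJ0 : (0 < #|Inst K|)%N by rewrite (card_Inst K0) muln_gt0 K0.
have h1 := greedy_EZ_ub R (@Ek_x K) (@Ek_a K) (leqnn _) hJ0.
have h2 := harm_K R K0.
exact: le_trans h1 h2.
Qed.

Lemma ranking_small K : (0 < K)%N -> ranking_EZ R (Ek K) ord0 <= 4 / K%:R.
Proof.
move=> K0.
apply: le_trans (ranking_EZ_ub R (@Ek_x K) (@Ek_E K)) _.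
rewrite -mulrA; apply: le_trans (ler_wpM2l _ (harm_K R K0)) _; first by rewrite ler0n.
by rewrite mulrA -natrM.
Qed.

Lemma ifm_inst K (F : Inst K -> R) eps : (0 < K)%N -> (forall i, 0 <= F i) ->
  F ord0 <= eps / 2 -> 0 < eps ->
  [/\ (0 < #|Inst K|)%N, 0 < OPT_IFM R (Ek K) & ifm_obj F <= eps * OPT_IFM R (Ek K)].
Proof.
move=> K0 F0 hF heps.
have hJ0 : (0 < #|Inst K|)%N by rewrite (card_Inst K0) muln_gt0 K0.
have [h1 h2] := final_ifm hJ0 F0 (ex_intro _ (@pstar R (Inst K))
   (conj (pstar_policy R (@Ek_kk K)) (clair_half R hJ0))) hF heps.
by split.
Qed.

Lemma gfm_eq (I : finType) (f : I -> R) :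
  gfm_obj [set [set i] | i : I] f = ifm_obj f.
Proof.
rewrite /gfm_obj /ifm_obj; congr inf.
apply/seteqP; split => v.
  move=> [g /= /imsetP [i _ ->] <-]; exists i => //.
  by rewrite cards1 invr1 mul1r big_set1.
move=> [i _ <-]; exists [set i]; first by apply/imsetP; exists i.
by rewrite cards1 invr1 mul1r big_set1.
Qed.

Lemma OPT_eq (I J : finType) (E : I -> J -> bool) :
  OPT_GFM R E [set [set i] | i : I] = OPT_IFM R E.
Proof.
rewrite /OPT_GFM /OPT_IFM; congr sup.
by apply/seteqP; split => v [p [hp ->]]; exists p; rewrite ?gfm_eq.
Qed.

Lemma pick_K (eps : R) : 0 < eps ->
  exists K, [/\ (0 < K)%N, 2 / K%:R <= eps / 2 & 4 / K%:R <= eps / 2].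
Proof.
move=> heps.
set K := (Num.Def.archi_bound (8 / eps)).+1.
have hK : 8 / eps < K%:R.
  apply: lt_le_trans (archi_boundP _) _; first by rewrite divr_ge0 // ltW.
  by rewrite ler_nat.
have Kp : (0 : R) < K%:R by rewrite ltr0n.
have h8 : 8 < K%:R * eps by rewrite -ltr_pdivrMr.
exists K; split => //.
  rewrite ler_pdivrMr // mulrAC ler_pdivlMr //; nra.
rewrite ler_pdivrMr // mulrAC ler_pdivlMr //; nra.
Qed.
End Final.

Lemma G_ok (K : nat) (K0 : (0 < K)%N) :
  [set [set i] | i : Inst K] != finset.set0 /\ finset.set0 \notin [set [set i] | i : Inst K].
Proof.
split.
  apply/set0Pn; exists [set ord0]; apply/imsetP; by exists ord0.
apply/imsetP => -[i _ e].
by have := set11 i; rewrite -e inE.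
Qed.


End MH.
Import MH.

Theorem theorem1 (R : realType) :
  (* GREEDY, IFM *)
  (forall eps : R, 0 < eps ->
     exists (I J : finType) (E : I -> J -> bool),
       [/\ (0 < #|I|)%N, 0 < OPT_IFM R E
         & ifm_obj (greedy_EZ R E) <= eps * OPT_IFM R E]) /\
  (* RANKING, IFM *)
  (forall eps : R, 0 < eps ->
     exists (I J : finType) (E : I -> J -> bool),
       [/\ (0 < #|I|)%N, 0 < OPT_IFM R E
         & ifm_obj (ranking_EZ R E) <= eps * OPT_IFM R E]) /\
  (* GREEDY, GFM *)
  (forall eps : R, 0 < eps ->
     exists (I J : finType) (E : I -> J -> bool) (G : {set {set I}}),
       [/\ G != finset.set0, finset.set0 \notin G, 0 < OPT_GFM R E G
         & gfm_obj G (greedy_EZ R E) <= eps * OPT_GFM R E G]) /\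
  (* RANKING, GFM *)
  (forall eps : R, 0 < eps ->
     exists (I J : finType) (E : I -> J -> bool) (G : {set {set I}}),
       [/\ G != finset.set0, finset.set0 \notin G, 0 < OPT_GFM R E G
         & gfm_obj G (ranking_EZ R E) <= eps * OPT_GFM R E G]).
Proof.
split; [|split; [|split]] => eps heps; have [K [K0 h2 h4]] := pick_K heps.
- exists (Inst K), (Inst K), (Ek K).
  apply: ifm_inst => //; [exact: greedy_ge0 | exact: le_trans (greedy_small R K0) h2].
- exists (Inst K), (Inst K), (Ek K).
  apply: ifm_inst => //; [exact: ranking_ge0 | exact: le_trans (ranking_small R K0) h4].
- exists (Inst K), (Inst K), (Ek K), [set [set i] | i : Inst K].
  have [g1 g2] := G_ok K0.
  have [_ o1 o2] := @ifm_inst R K (greedy_EZ R (Ek K)) eps K0 (@greedy_ge0 R _ _ (Ek K))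
     (le_trans (greedy_small R K0) h2) heps.
  by split => //; rewrite OPT_eq // gfm_eq.
- exists (Inst K), (Inst K), (Ek K), [set [set i] | i : Inst K].
  have [g1 g2] := G_ok K0.
  have [_ o1 o2] := @ifm_inst R K (ranking_EZ R (Ek K)) eps K0 (@ranking_ge0 R _ _ (Ek K))
     (le_trans (ranking_small R K0) h4) heps.
  by split => //; rewrite OPT_eq // gfm_eq.
Qed.
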